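(* Let $(X,d)$ be a compact metric space and $f_{1,\infty}$ a sequence of continuous self-maps of $X$. If $(\mathcal{M}(X),\widetilde{f}_{1,\infty})$ is topologically transitive, then $(X,f_{1,\infty})$ is topologically transitive.
   Context: For $f_{1,\infty}=\{f_n\}_{n\ge1}$ write $f_1^n=f_n\circ\cdots\circ f_1$. $\mathcal{M}(X)$ is the space of Borel probability measures on $X$ with the weak$^*$ topology, and $\widetilde{f}_1^n(\mu)(A)=\mu((f_1^n)^{-1}(A))$ for Borel $A$. A non-autonomous system $(Y,g_{1,\infty})$ is topologically transitive if for every pair of non-empty open sets $U,V$ there is $n\in\mathbb{N}$ with $g_1^n(U)\cap V\ne\emptyset$. *)

(* Defs.v *)
From HB Require Import structures.
From mathcomp Require Import all_boot all_order all_algebra.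
From mathcomp Require Import all_classical all_reals all_analysis.
Set Implicit Arguments. Unset Strict Implicit. Unset Printing Implicit Defensive.
Import Order.TTheory GRing.Theory Num.Theory.
Import numFieldNormedType.Exports.
Local Open Scope classical_set_scope.
Local Open Scope ring_scope.

Notation Borel X := (g_sigma_algebraType (@open X)).

Definition PM (R : realType) (X : ptopologicalType) := probability (Borel X) R.

(* Non-autonomous compositions: f is indexed from 1 (f 0 is unused);
   comp f n = f n \o ... \o f 1, and comp f 0 = id. *)
Fixpoint comp (X : Type) (f : nat -> X -> X) (n : nat) : X -> X :=
  match n with
  | 0 => id
  | n'.+1 => f n'.+1 \o comp f n'
  end.

Definition topo_transitive (Y : topologicalType) (g : nat -> Y -> Y) : Prop :=
  forall U V : set Y, open U -> open V -> U !=set0 -> V !=set0 ->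
    exists n, (1 <= n)%N /\ (comp g n @` U) `&` V !=set0.

(* Weak-* topology on M(X): a set of probability measures is open iff it
   contains a basic weak-* neighbourhood of each of its points, i.e. a set
   {nu | forall i, |int g_i dnu - int g_i dmu| < eps} for finitely many
   continuous real functions g_i and eps > 0. *)
Definition weak_open (R : realType) (X : ptopologicalType) (W : set (PM R X)) :
  Prop :=
  forall mu, W mu ->
    exists (gs : seq (X -> R)) (eps : R),
      [/\ (forall g, g \in gs -> continuous g), 0 < eps &
        forall nu : PM R X,
          (forall g, g \in gs ->
             (`| (\int[nu]_x (g x)%:E) - (\int[mu]_x (g x)%:E) | < eps%:E)%E) ->
          W nu].

(* Topological transitivity of (M(X), tilde f_{1,oo}), where
   tilde f_1^n (mu) is the push-forward A |-> mu ((f_1^n)^-1 A). *)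
Definition measure_transitive (R : realType) (X : ptopologicalType)
  (f : nat -> X -> X) : Prop :=
  forall U V : set (PM R X), weak_open U -> weak_open V ->
    U !=set0 -> V !=set0 ->
    exists n, (1 <= n)%N /\
      exists (mu nu : PM R X), [/\ U mu, V nu &
        forall A : set (Borel X), measurable A ->
          nu A = mu (comp f n @^-1` A)].

(* Main.v *)
Require Import Defs.
From HB Require Import structures.
From mathcomp Require Import all_boot all_order all_algebra.
From mathcomp Require Import all_classical all_reals all_analysis.
Import numFieldNormedType.Exports.
Import Order.TTheory GRing.Theory Num.Theory.
Local Open Scope classical_set_scope.
Local Open Scope ring_scope.

Section Aux.
Variables (R : realType) (X : pseudoPMetricType R).

Lemma sep_fun (x0 : X) (U : set X) : open U -> U x0 ->
  exists g : X -> R, [/\ continuous g, (forall x, 0 <= g x <= 1),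
    g x0 = 1 & (forall x, ~ U x -> g x = 0)].
Proof.
move=> oU Ux0.
have : uniform_separator [set x0] (~` U).
  apply: (@point_uniform_separator R); first exact: (open_closedC oU).
  by move=> /(_ Ux0).
move=> /(@uniform_separatorP _ R) [f [cf f01 f0 f1]].
exists (fun x => 1 - f x); split.
- by move=> x; apply: continuousB; [exact: cvg_cst|exact: cf].
- move=> x; have := f01 (f x) (ex_intro2 _ _ x I erefl).
  rewrite /= in_itv /= => /andP[a b]; apply/andP; split; rewrite ?subr_ge0 //.
  by rewrite lerBlDr lerDl.
- by rewrite (f0 (f x0) (ex_intro2 _ _ x0 erefl erefl)) subr0.
- by move=> x nUx; rewrite (f1 (f x) (ex_intro2 _ _ x nUx erefl)) subrr.
Qed.

Lemma open_meas (U : set X) : open U -> @measurable _ (Borel X) U.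
Proof. by move=> oU; apply: sub_sigma_algebra. Qed.

Lemma cont_meas (g : X -> R) : continuous g ->
  measurable_fun (setT : set (Borel X)) g.
Proof.
move=> /continuousP cg; apply: (measurability _ (measurable_realfun.RGenOpens.measurableE R)).
move=> _ [_ [a [b ->] <-]]; rewrite setTI; apply: open_meas.
exact/cg/interval_open.
Qed.


Lemma int_bound (g : X -> R) (U : set X) (mu : PM R X) :
  open U -> continuous g -> (forall x, 0 <= g x <= 1) ->
  (forall x, ~ U x -> g x = 0) ->
  (0 <= \int[mu]_x (g x)%:E <= mu U)%E.
Proof.
move=> oU cg g01 g0; apply/andP; split.
  by apply: integral_ge0 => x _; rewrite lee_fin; case/andP: (g01 x).
have mU := open_meas U oU.
have -> : mu U = (\int[mu]_x (\1_U x)%:E)%E by rewrite integral_indic // setIT.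
apply: ge0_le_integral => //.
- by move=> x _; rewrite lee_fin; case/andP: (g01 x).
- by apply/measurable_realfun.measurable_EFinP; exact: cont_meas.
- by apply/measurable_realfun.measurable_EFinP; exact: measurable_realfun.measurable_indic.
- move=> x _; rewrite lee_fin /indic; have [Ux|nUx] := pselect (U x).
    by rewrite mem_set //; case/andP: (g01 x).
  by rewrite g0 // memNset.
Qed.

End Aux.
Arguments open_meas {R X} U.
Arguments int_bound {R X g U}.
Arguments cont_meas {R X g}.

Section Main.
Variables (R : realType) (X : pseudoPMetricType R).
Local Open Scope ereal_scope.

Definition W (g : X -> R) : set (PM R X) :=
  [set mu : PM R X | (2^-1)%:E < \int[mu]_x (g x)%:E].

Lemma int_fin (g : X -> R) (U : set X) (mu : PM R X) :
  open U -> continuous g -> (forall x, (0 <= g x <= 1)%R) ->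
  (forall x, ~ U x -> g x = 0%R) ->
  exists r : R, \int[mu]_x (g x)%:E = r%:E /\ (r%:E <= mu U).
Proof.
move=> oU cg g01 g0; have /andP[i0 iU] := int_bound mu oU cg g01 g0.
have U1 := probability_le1 mu (open_meas U oU).
exists (fine (\int[mu]_x (g x)%:E)); rewrite fineK //.
by rewrite ge0_fin_numE // (le_lt_trans (le_trans iU U1)) // ltey.
Qed.

Arguments int_fin {g U}.

Lemma W_open (g : X -> R) (U : set X) :
  open U -> continuous g -> (forall x, (0 <= g x <= 1)%R) ->
  (forall x, ~ U x -> g x = 0%R) -> weak_open (W g).
Proof.
move=> oU cg g01 g0 mu Wmu.
have [r [er _]] := int_fin mu oU cg g01 g0.
move: Wmu; rewrite /W /= er lte_fin => hr.
exists [:: g], (r - 2^-1)%R; split.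
- by move=> g'; rewrite inE => /eqP ->.
- by rewrite subr_gt0.
- move=> nu /(_ g (mem_head _ _)); rewrite er.
  have [s [es _]] := int_fin nu oU cg g01 g0.
  rewrite /W /= es -EFinB lte_fin => /ltr_distlCBl.
  by rewrite lte_fin opprB addrC subrK.
Qed.

Lemma W_dirac (g : X -> R) (x0 : X) : continuous g -> g x0 = 1%R ->
  W g (@dirac _ (Borel X) x0 R : PM R X).
Proof.
move=> cg g1; rewrite /W /= integral_dirac //.
  by rewrite diracE mem_set // g1 mul1e lte_fin invf_lt1 // ltr1n.
by apply/measurable_realfun.measurable_EFinP; exact: cont_meas.
Qed.

Lemma comp_cont (f : nat -> X -> X) : (forall n, continuous (f n)) ->
  forall n, continuous (Defs.comp f n).
Proof.
move=> cf; elim => [|n IH] /= x; first exact: cvg_id.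
by apply: continuous_comp; [exact: IH|exact: cf].
Qed.

End Main.

Theorem corollary3p1 (R : realType) (X : pseudoPMetricType R)
  (f : nat -> X -> X) :
  hausdorff_space X -> compact [set: X] ->
  (forall n, continuous (f n)) ->
  measure_transitive R f -> topo_transitive f.
Proof.
move=> _ _ cf mt U V oU oV [x0 Ux0] [y0 Vy0].
have [g [cg g01 g1 g0]] := @sep_fun _ _ x0 U oU Ux0.
have [h [ch h01 h1 h0]] := @sep_fun _ _ y0 V oV Vy0.
have [n [n1 [mu [nu [Wmu Wnu eq]]]]] := mt (@W _ _ g) (@W _ _ h)
  (@W_open _ _ g U oU cg g01 g0) (@W_open _ _ h V oV ch h01 h0)
  (ex_intro _ _ (@W_dirac _ _ g x0 cg g1)) (ex_intro _ _ (@W_dirac _ _ h y0 ch h1)).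
exists n; split => //.
set P := Defs.comp f n @^-1` V.
have oP : open P by apply: open_comp => // x _; exact: comp_cont.
have eP := eq V (open_meas V oV).
have [r [er rU]] := @int_fin _ _ g U mu oU cg g01 g0.
have [s [es sV]] := @int_fin _ _ h V nu oV ch h01 h0.
move: Wmu Wnu; rewrite /W /= er es !lte_fin => hr hs.
case: (pselect (exists x, U x /\ P x)) => [[x [Ux Px]]|nex].
  by exists (Defs.comp f n x); split => //; exists x.
have UP0 : U `&` P = set0.
  by apply/seteqP; split => x //= [Ux Px]; apply: nex; exists x.
have mU := open_meas U oU.
have mP := open_meas P oP.
have le1 : (mu U + nu V <= 1)%E.
  have eP2 : mu P = nu V by rewrite eP.
  rewrite -eP2 -measureU //; apply: probability_le1; exact: measurableU.
have : ((r + s)%:E <= mu U + nu V)%E by rewrite EFinD; exact: leeD.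
move=> /le_trans /(_ le1); rewrite lee_fin => rs1.
have : (2^-1 + 2^-1 < r + s)%R by exact: ltrD.
have h2 : (2^-1 + 2^-1 = 1 :> R)%R by rewrite [RHS](splitr 1) mul1r.
by rewrite h2 => /lt_le_trans /(_ rs1); rewrite ltxx.
Qed.
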